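(* Let $V$ be a vertex algebra and $M$ a subspace of $V$ with $\mathcal{D}(V)\subseteq M$. Then for $u\in V$, $u\in lsr_{0,-1}(M)$ if and only if $u\in rsr_{0,-1}(M)$. In particular $lsr_{0,-1}(M)=rsr_{0,-1}(M)=sr_{0,-1}(M)$.
   Context: A vertex algebra $(V,Y,\mathbf{1})$ is over $\mathbb{C}$; for $u\in V$ write $Y(u,z)=\sum_{n\in\mathbb{Z}}u_nz^{-n-1}$ with $u_n\in\operatorname{End}V$. $\mathcal{D}$ is the linear operator $\mathcal{D}(v)=v_{-2}\mathbf{1}$. Iterated products are nested to the right: $v_{n_1}\cdots v_{n_t}v=v_{n_1}(\cdots(v_{n_t}v))$. For a subspace $M\subseteq V$: $lsr_{0,-1}(M)$ is the set of $v\in V$ such that for every $b\in V$ there is $m\ge0$ with $b_sv_{n_1}\cdots v_{n_t}v\in M$ for all $t\ge m$ and all $s,n_1,\dots,n_t\in\{0,-1\}$. $rsr_{0,-1}(M)$ is the set of $v\in V$ such that for every $w\in V$ there is $m\ge 0$ with $(v_{n_1}\cdots v_{n_t}v)_nw\in M$ for all $t\ge m$ and all $n,n_1,\dots,n_t\in\{0,-1\}$. $sr_{0,-1}(M)=lsr_{0,-1}(M)\cap rsr_{0,-1}(M)$. *)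

(* Defs.v *)
From HB Require Import structures.
From mathcomp Require Import all_boot all_order all_algebra.
From mathcomp Require Import complex.
From mathcomp Require Import Rstruct.
Set Implicit Arguments. Unset Strict Implicit. Unset Printing Implicit Defensive.
Import Order.TTheory GRing.Theory Num.Theory.
Local Open Scope ring_scope.

Definition CC : fieldType := (Rdefinitions.R)[i].

Definition binz (p : int) (i : nat) : CC :=
  (\prod_(j < i) (p%:~R - j%:R)) / (i`!)%:R.

Section VA.
Variable V : lmodType CC.
(* Y u n v  is  u_n v, where Y(u,z) = sum_n u_n z^{-n-1}. *)
Variable Y : V -> int -> V -> V.
Variable one : V.

Definition borch_lhs (u v w : V) (p q r : int) (M : nat) : V :=
  \sum_(i < M) binz p i *: Y (Y u (r + i%:Z) v) (p + q - i%:Z) w.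
Definition borch_rhs (u v w : V) (p q r : int) (M : nat) : V :=
  \sum_(i < M) ((-1) ^+ i * binz r i) *:
     (Y u (p + r - i%:Z) (Y v (q + i%:Z) w)
      - ((-1 : CC) ^ r) *: Y v (q + r - i%:Z) (Y u (p + i%:Z) w)).

Record is_vertex_algebra : Prop := {
  va_linear_l : forall n (a : CC) u u' v,
      Y (a *: u + u') n v = a *: Y u n v + Y u' n v;
  va_linear_r : forall u n (a : CC) v v',
      Y u n (a *: v + v') = a *: Y u n v + Y u n v';
  va_truncation : forall u v, exists N : int, forall n, N <= n -> Y u n v = 0;
  va_vacuum : forall n v, Y one n v = (if n == (-1)%R then v else 0);
  va_creation : forall u, Y u (-1) one = u /\ (forall n : int, 0 <= n -> Y u n one = 0);
  (* Borcherds identity (component form of the Jacobi identity); all sums are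
     finite by truncation, so they are stated as eventually-stable partial sums. *)
  va_borcherds : forall u v w (p q r : int), exists N : nat, forall M : nat,
      (N <= M)%N -> borch_lhs u v w p q r M = borch_rhs u v w p q r M
}.

Definition Dop (v : V) : V := Y v (-2) one.

Definition is_subspace (M : V -> Prop) : Prop :=
  M 0 /\ forall (a : CC) x y, M x -> M y -> M (a *: x + y).

Definition iterY (v : V) (ns : seq int) : V := foldr (fun n x => Y v n x) v ns.

Definition in01 (n : int) : bool := (n == 0) || (n == (-1)%R).

Definition lsr01 (M : V -> Prop) (v : V) : Prop :=
  forall b : V, exists m : nat, forall (s : int) (ns : seq int),
    (m <= size ns)%N -> in01 s -> all in01 ns -> M (Y b s (iterY v ns)).

Definition rsr01 (M : V -> Prop) (v : V) : Prop :=
  forall w : V, exists m : nat, forall (n : int) (ns : seq int),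
    (m <= size ns)%N -> in01 n -> all in01 ns -> M (Y (iterY v ns) n w).

Definition sr01 (M : V -> Prop) (v : V) : Prop := lsr01 M v /\ rsr01 M v.
End VA.

(* Main.v *)
Require Import Defs.
From HB Require Import structures.
From mathcomp Require Import all_boot all_order all_algebra.
From mathcomp Require Import zify complex Rstruct.
Import Order.TTheory GRing.Theory Num.Theory.
Local Open Scope ring_scope.

Section S.
Variables (V : lmodType CC) (Y : V -> int -> V -> V) (one : V).
Hypothesis HVA : is_vertex_algebra Y one.
Variable P : V -> Prop.
Hypothesis HM : is_subspace P.
Hypothesis HD : forall v : V, P (Dop Y one v).

Lemma Y0r u n : Y u n 0 = 0.
Proof.
have := va_linear_r HVA u n (-1) 0 0.
by rewrite scaler0 addr0 scaleN1r addNr.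
Qed.

Lemma P0 : P 0. Proof. exact: HM.1. Qed.
Lemma PZ a x : P x -> P (a *: x).
Proof. move=> Px; have := HM.2 a x 0 Px P0; by rewrite addr0. Qed.
Lemma PD x y : P x -> P y -> P (x + y).
Proof. move=> Px Py; have := HM.2 1 x y Px Py; by rewrite scale1r. Qed.
Lemma Psum n (F : 'I_n -> V) : (forall i, P (F i)) -> P (\sum_(i < n) F i).
Proof. move=> H; apply: (big_ind P P0 PD) => i _; exact: H. Qed.

Lemma Ycre0 u (n : int) : 0 <= n -> Y u n one = 0.
Proof. move=> h; exact: (va_creation HVA u).2. Qed.

Lemma binz0 p : binz p 0 = 1.
Proof. by rewrite /binz big_ord0 divr1. Qed.

Lemma binz1 p : binz p 1 = p%:~R.
Proof. by rewrite /binz big_ord1 subr0 divr1. Qed.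

Lemma binz0S i : binz 0 i.+1 = 0.
Proof. by rewrite /binz big_ord_recl /= subr0 mul0r mul0r. Qed.


Lemma PDn x (k : nat) : P (Y x (-1 - k.+1%:Z) one).
Proof.
set r : int := -1 - k%:Z.
have Hc : forall n : nat, Y x (0 + n%:Z) one = 0.
  by move=> n; apply: Ycre0; rewrite add0r.
have [N HN] := va_borcherds HVA x one one 0 (-2) r.
have := HN N.+2 (ltnW (leqnSn N.+1)).
have -> : borch_lhs Y x one one 0 (-2) r N.+2 = Dop Y one (Y x r one).
  rewrite /borch_lhs big_ord_recl big1 => [|i _].
    by rewrite binz0 scale1r addr0 sub0r subr0 /Dop.
  by rewrite lift0 binz0S scale0r.
have -> : borch_rhs Y x one one 0 (-2) r N.+2 = (- r%:~R) *: Y x (r - 1) one.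
  rewrite /borch_rhs big_ord_recl big_ord_recl big1 => [|i _].
    rewrite /bump /= !Hc !Y0r scaler0 !subr0 addr0 !(va_vacuum HVA).
    have -> : bump 0 0 = 1%N by [].
    have -> : (-2 + 0%:Z == -1 :> int) = false by [].
    have -> : (-2 + 1%:Z == -1 :> int) = true by [].
    rewrite Y0r scaler0 add0r binz1 expr1 mulN1r add0r.
    by [].
  rewrite !lift0 /bump /= !Hc !Y0r scaler0 subr0 (va_vacuum HVA).
    have -> : (-2 + (i.+2)%:Z == -1 :> int) = false by lia.
    by rewrite Y0r scaler0.
move=> E.
have -> : (-1 - k.+1%:Z) = r - 1 by rewrite /r; lia.
have := HD (Y x r one); rewrite E => H.
have := PZ ((- r%:~R)^-1) _ H.
rewrite scalerA mulVf ?scale1r //.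
have -> : - r%:~R = (k.+1)%:R :> CC.
  rewrite -mulrNz (_ : - r = k.+1%:Z) //; rewrite /r; lia.
have h : (k.+1%:R : (Rdefinitions.R)[i]) != 0 by rewrite pnatr_eq0.
exact: h.
Qed.

Lemma skew a b (r : int) : P (Y a r b + ((-1 : CC) ^ r) *: Y b r a).
Proof.
have [N HN] := va_borcherds HVA a b one (-1) 0 r.
have := HN N.+2 (ltnW (leqnSn N.+1)).
rewrite /borch_rhs big_ord_recl big1 => [|i _]; last first.
  rewrite lift0 Ycre0; last by rewrite add0r.
  rewrite Ycre0; last by lia.
  by rewrite !Y0r scaler0 subr0 scaler0.
rewrite /borch_lhs big_ord_recl.
have e1 : Y (Y a (r + (nat_of_ord (@ord0 N.+1))%:Z) b) (-1 + 0 - (nat_of_ord (@ord0 N.+1))%:Z) one = Y a r b.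
  by rewrite /= addr0 subr0 addr0 (va_creation HVA _).1.
have e2 : Y b (nat_of_ord (@ord0 N.+1))%:Z one = 0 by apply: Ycre0.
have e3 : Y a (-1 + (nat_of_ord (@ord0 N.+1))%:Z) one = a by rewrite /= addr0 (va_creation HVA _).1.
rewrite e1 e2 e3 Y0r sub0r binz0 expr0 mul1r !scale1r addr0 /= subr0.
set REST := \sum_(i < _) _ => E.
have -> : Y a r b + (-1) ^ r *: Y b r a = - REST.
  by rewrite -[REST](addKr (Y a r b)) E opprD !opprK binz0 scale1r addr0 add0r opprK.
have : P REST.
  apply: Psum => i; apply: PZ; rewrite (_ : bump 0 i = i.+1) //; exact: PDn.
move=> h; have := PZ (-1) _ h; by rewrite scaleN1r.
Qed.

Lemma swap a b (n : int) : P (Y a n b) -> P (Y b n a).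
Proof.
move=> h.
have := PD _ _ (skew b a n) (PZ (- ((-1 : CC) ^ n)) _ h).
by rewrite scaleNr addrK.
Qed.

End S.

Theorem mainTheorem3 (V : lmodType CC) (Y : V -> int -> V -> V) (one : V)
  (HVA : is_vertex_algebra Y one) (M : V -> Prop)
  (HM : is_subspace M) (HD : forall v : V, M (Dop Y one v)) :
  (forall u : V, lsr01 Y M u <-> rsr01 Y M u) /\
  (forall u : V, (lsr01 Y M u <-> sr01 Y M u) /\ (rsr01 Y M u <-> sr01 Y M u)).
Proof.
have E : forall u : V, lsr01 Y M u <-> rsr01 Y M u.
  move=> u; split=> H w; have [m Hm] := H w; exists m => n ns h1 h2 h3;
    apply: (@swap V Y one HVA M HM HD); exact: (Hm n ns h1 h2 h3).
split=> // u; split; split.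
- by move=> h; split=> //; apply/E.
- by case.
- by move=> h; split=> //; apply/E.
- by case.
Qed.
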